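(* Let $K$ be a field of characteristic $0$, $n\ge2$, and $f\in K[[x_1,\dots,x_n]]$. Let $T=x_1D_{x_1}-x_2D_{x_2}$ act on $K[[x_1,\dots,x_n]]$ with $D_{x_i}=\partial/\partial x_i$. Then there exists $s\in\mathbb N$ with $T^s(f)=0$ if and only if there exists a power series $g\in K[[y_1,\dots,y_{n-1}]]$ in $n-1$ variables such that $f(x_1,\dots,x_n)=g(x_1x_2,x_3,\dots,x_n)$. *)

(* Defs.v *)
From mathcomp Require Import all_boot all_order all_algebra.
Set Implicit Arguments. Unset Strict Implicit. Unset Printing Implicit Defensive.
Import GRing.Theory.
Local Open Scope ring_scope.

(* Formal power series in n variables x_0,...,x_{n-1} over K, represented
   by their coefficient function on exponent vectors (monomials). *)
Definition mon (n : nat) := {ffun 'I_n -> nat}.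
Definition fps (K : fieldType) (n : nat) := mon n -> K.

Definition mon_inc n (a : mon n) (i : 'I_n) : mon n := [ffun j => a j + (j == i)]%N.
Definition mon_dec n (a : mon n) (i : 'I_n) : mon n := [ffun j => a j - (j == i)]%N.

Definition fps0 (K : fieldType) (n : nat) : fps K n := fun _ => 0.

Definition fps_deriv (K : fieldType) n (i : 'I_n) (f : fps K n) : fps K n :=
  fun a => (a i).+1%:R * f (mon_inc a i).

Definition fps_mulX (K : fieldType) n (i : 'I_n) (f : fps K n) : fps K n :=
  fun a => if (0 < a i)%N then f (mon_dec a i) else 0.

Definition fps_sub (K : fieldType) n (f g : fps K n) : fps K n := fun a => f a - g a.

(* T = x_1 D_{x_1} - x_2 D_{x_2}  (x_1, x_2 are the indices ord0, 1) *)
Definition opT (K : fieldType) m (f : fps K m.+2) : fps K m.+2 :=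
  fps_sub (fps_mulX ord0 (fps_deriv ord0 f))
          (fps_mulX (lift ord0 ord0) (fps_deriv (lift ord0 ord0) f)).

(* g(x_1 x_2, x_3, ..., x_n) for g in n-1 = m+1 variables y_1..y_{m+1}:
   sum_b g_b (x1 x2)^{b_1} x3^{b_2} ... ; its coefficient at x^a is
   g_(a_1, a_3, ..., a_n) if a_1 = a_2 and 0 otherwise. *)
Definition subst_x1x2 (K : fieldType) m (g : fps K m.+1) : fps K m.+2 :=
  fun a => if a ord0 == a (lift ord0 ord0)
           then g [ffun j : 'I_m.+1 => if j == ord0 then a ord0 else a (lift ord0 j)]
           else 0.
Arguments fps0 K n _ : clear implicits.

(* Main.v *)
Require Import Defs.
From mathcomp Require Import all_boot all_order all_algebra.
Local Open Scope ring_scope.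
Import GRing.Theory.
From Stdlib Require Import FunctionalExtensionality.

Lemma mulX_deriv (K : fieldType) n (i : 'I_n) (f : fps K n) a :
  fps_mulX i (fps_deriv i f) a = (a i)%:R * f a.
Proof.
rewrite /fps_mulX /fps_deriv.
case: (posnP (a i)) => [->|Hp]; first by rewrite mul0r.
have E : mon_inc (mon_dec a i) i = a.
  apply/ffunP => j; rewrite !ffunE.
  case: (eqVneq j i) => [->|_]; last by rewrite subn0 addn0.
  by rewrite /= subnK.
rewrite E; congr (_ * _); rewrite /mon_dec ffunE eqxx /=.
by rewrite subn1 prednK.
Qed.

Lemma opTE (K : fieldType) m (f : fps K m.+2) a :
  opT f a = ((a ord0)%:R - (a (lift ord0 ord0))%:R) * f a.
Proof. by rewrite /opT /fps_sub !mulX_deriv mulrBl. Qed.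

Lemma iter_opTE (K : fieldType) m s (f : fps K m.+2) a :
  iter s (@opT K m) f a = ((a ord0)%:R - (a (lift ord0 ord0))%:R) ^+ s * f a.
Proof.
elim: s => [|s IH] /=; first by rewrite expr0 mul1r.
by rewrite opTE IH mulrA -exprS.
Qed.

Lemma diff_neq0 (K : fieldType) (charK : [pchar K] =i pred0) (x y : nat) :
  x != y -> (x%:R - y%:R : K) != 0.
Proof.
move=> Hxy.
have P k : (0 < k)%N -> (k%:R : K) != 0.
  move=> Hk; rewrite ((pcharf0P K).1 charK). by rewrite -lt0n.
case: (ltngtP x y) => H; last by rewrite H eqxx in Hxy.
- rewrite -opprB -natrB ?(ltnW H) // oppr_eq0; apply: P; by rewrite subn_gt0.
- rewrite -natrB ?(ltnW H) //; apply: P; by rewrite subn_gt0.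
Qed.

Lemma predI m (i : 'I_m.+2) : (i.-1 < m.+1)%N.
Proof. by case: i => [[|i] Hi]. Qed.

Theorem lemma3p7 (K : fieldType) (m : nat) (charK : [pchar K] =i pred0)
  (f : fps K m.+2) :
  (exists s : nat, iter s (@opT K m) f = fps0 K m.+2) <->
  (exists g : fps K m.+1, f = subst_x1x2 g).
Proof.
split.
- move=> [s Hs].
  have Z (a : mon m.+2) : a ord0 != a (lift ord0 ord0) -> f a = 0.
    move=> Ha; have := congr1 (fun h => h a) Hs; rewrite iter_opTE /fps0 => /eqP.
    by rewrite mulf_eq0 expf_eq0 (negbTE (@diff_neq0 K charK _ _ Ha)) andbF /= => /eqP.
  exists (fun b : mon m.+1 => f [ffun i : 'I_m.+2 => b (inord i.-1)]).
  apply: functional_extensionality => a; rewrite /subst_x1x2.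
  case: (eqVneq (a ord0) (a (lift ord0 ord0))) => Ha; last by rewrite Z.
  congr f; apply/ffunP => i; rewrite !ffunE.
  case: (eqVneq (inord i.-1 : 'I_m.+1) ord0) => Hi.
    have := congr1 val Hi; rewrite /= inordK; last exact: predI.
    case: i Hi => [[|[|i]] Hi] //= _ _.
    + by apply: f_equal; apply: val_inj.
    + by rewrite Ha; apply: f_equal; apply: val_inj.
  apply: f_equal; apply: val_inj => /=.
  rewrite /bump /= add1n inordK; last exact: predI.
  case: i Hi => [[|i] Hi] //= Hne.
  by exfalso; move/eqP: Hne; apply; apply: val_inj; rewrite /= inordK.
- move=> [g ->]; exists 1%N; apply: functional_extensionality => a /=.
  rewrite opTE /subst_x1x2 /fps0.
  case: (eqVneq (a ord0) (a (lift ord0 ord0))) => [->|_]; last by rewrite mulr0.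
  by rewrite subrr mul0r.
Qed.
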